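(* Assume the standing setup and let $p$ be a prime divisor of $N$. Then the elements $$\alpha_{i,j,k}=q_{i,j}(\theta)\,\theta^k,\qquad 1\le i\le m,\ 1\le j\le\ell_i,\ 0\le k<\deg g_i,$$ where $q_{i,j}\in\mathbb Z[x]$ is the quotient of the division of $f$ by $g_i^j$, form a $\mathbb Z_{(p)}$-basis of $\mathbb Z_{(p)}[\theta]$. (In particular they are $\mathbb Z$-linearly independent and the polynomials $q_{i,j}x^k$ are linearly independent modulo $p$.)
   Context: Standing setup: $f\in\mathbb Z[x]$ monic irreducible of degree $n>1$, $\theta\in\overline{\mathbb Q}$ a root; $N>1$ an integer all of whose prime divisors are $>n$; $g_1,\dots,g_m\in\mathbb Z[x]$ monic of positive degree and $\ell_1,\dots,\ell_m$ positive integers with $f\equiv g_1^{\ell_1}\cdots g_m^{\ell_m}\pmod N$, such that for every prime $p\mid N$ the polynomials $\operatorname{red}_p(g_i)$ (reductions mod $p$) are squarefree and pairwise coprime in $\mathbb F_p[x]$. $\mathbb Z_{(p)}$ is the localization of $\mathbb Z$ at $p\mathbb Z$. *)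

(* Defs.v *)
From HB Require Import structures.
From mathcomp Require Import all_boot all_order all_algebra all_field.
Set Implicit Arguments. Unset Strict Implicit. Unset Printing Implicit Defensive.
Import Order.TTheory GRing.Theory Num.Theory.
Local Open Scope ring_scope.

Definition Zloc (p : nat) (x : algC) : Prop :=
  exists (a : int) (b : nat), ~~ (p %| b)%N /\ x = a%:~R / b%:R.

Definition ZlocTheta (p : nat) (theta y : algC) : Prop :=
  exists P : {poly algC}, (forall i, Zloc p P`_i) /\ y = P.[theta].

Definition is_Zloc_basis (p : nat) (theta : algC) (I : finType) (v : I -> algC)
  : Prop :=
  [/\ (forall x, ZlocTheta p theta (v x)),
      (forall y, ZlocTheta p theta y ->
         exists c : I -> algC, (forall x, Zloc p (c x)) /\ y = \sum_x c x * v x)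
    & (forall c : I -> algC, (forall x, Zloc p (c x)) ->
         \sum_x c x * v x = 0 -> forall x, c x = 0)].

Definition squarefree_poly (F : fieldType) (P : {poly F}) : Prop :=
  forall d : {poly F}, (d * d %| P) -> (size d <= 1)%N.

Definition redp (p : nat) (P : {poly int}) : {poly 'F_p} :=
  map_poly (fun z : int => z%:~R) P.

Definition polyC_alg (P : {poly int}) : {poly algC} := map_poly (fun z : int => z%:~R) P.

(* Main.v *)
Require Import Defs.
From HB Require Import structures.
From mathcomp Require Import all_boot all_order all_algebra all_field.
From mathcomp Require Import ring zify.
Import Order.TTheory GRing.Theory Num.Theory.
Local Open Scope ring_scope.

Lemma Zloc_int (p : nat) (z : int) : prime p -> Zloc p z%:~R.
Proof.
move=> pp; exists z, 1%N; split; last by rewrite divr1.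
by rewrite dvdn1; case: eqP pp => // ->.
Qed.

Lemma Zloc_nz (p b : nat) : ~~ (p %| b)%N -> (b%:R : algC) != 0.
Proof. by rewrite pnatr_eq0; apply: contra => /eqP ->; rewrite dvdn0. Qed.

Lemma Zloc_add p x y : prime p -> Zloc p x -> Zloc p y -> Zloc p (x + y).
Proof.
move=> pp [a [b [hb ->]]] [c [d [hd ->]]].
exists (a * d%:Z + c * b%:Z), (b * d)%N; split.
  by rewrite Euclid_dvdM // negb_or hb hd.
have b0 := @Zloc_nz p b hb; have d0 := @Zloc_nz p d hd.
rewrite natrM rmorphD !rmorphM /= !pmulrn.
rewrite -[(b%:Z)%:~R]/((b%:Z)%:~R) -!pmulrn.
field; by rewrite b0 d0.
Qed.

Lemma Zloc_mul p x y : prime p -> Zloc p x -> Zloc p y -> Zloc p (x * y).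
Proof.
move=> pp [a [b [hb ->]]] [c [d [hd ->]]].
exists (a * c), (b * d)%N; split.
  by rewrite Euclid_dvdM // negb_or hb hd.
have b0 := @Zloc_nz p b hb; have d0 := @Zloc_nz p d hd.
rewrite natrM rmorphM /=.
field; by rewrite b0 d0.
Qed.

Lemma Zloc_sum p (I : finType) (P : pred I) (F : I -> algC) : prime p ->
  (forall i, Zloc p (F i)) -> Zloc p (\sum_(i | P i) F i).
Proof.
move=> pp hF; apply: (big_ind (Zloc p)) => //.
  by have := @Zloc_int p 0 pp.
by move=> x y; apply: Zloc_add.
Qed.

Lemma Zloc_inv p (d : int) : prime p -> ~~ (p %| d)%Z -> Zloc p (d%:~R)^-1.
Proof.
move=> pp hd; exists d, (`|d| ^ 2)%N; split.
  by by rewrite Euclid_dvdX // andbT.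
have d0 : d != 0 by apply: contra hd => /eqP ->; rewrite dvdz0.
rewrite natrX -[(`|d|%N)%:R]/((`|d|%N%:Z)%:~R) abszE.
rewrite -rmorphXn /= (real_normK (num_real d)) rmorphXn /=.
have d0' : (d%:~R : algC) != 0 by rewrite intr_eq0.
by field.
Qed.

Lemma base_uniq (F : fieldType) (g : {poly F}) (L : nat) (P : 'I_L -> {poly F}) :
  g != 0 -> (forall j, (size (P j) < size g)%N) ->
  g ^+ L %| \sum_(j < L) P j * g ^+ j -> forall j, P j = 0.
Proof.
move=> g0; elim: L P => [|L IH] P hP hd j; first by case: j.
rewrite big_ord_recl expr0 mulr1 in hd.
have eqT : \sum_(i < L) P (lift ord0 i) * g ^+ (bump 0 i)
   = g * \sum_(i < L) P (lift ord0 i) * g ^+ i.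
  rewrite mulr_sumr; apply: eq_bigr => i _.
  by rewrite /bump /= add1n exprS mulrCA.
rewrite eqT in hd.
have hP0 : P ord0 = 0.
  have : g %| P ord0.
    have : g %| g ^+ L.+1 by rewrite dvdp_exp.
    move/dvdp_trans/(_ hd) => h.
    by rewrite -(dvdp_addl (P ord0) (dvdp_mulIl g (\sum_(i < L) P (lift ord0 i) * g ^+ i))).
  apply: contraTeq => nz.
  by rewrite gtNdvdp // hP.
rewrite hP0 add0r exprS dvdp_mul2l // in hd.
have := IH _ (fun i => hP _) hd.
by case: (unliftP ord0 j) => [j' ->|->] // h.
Qed.

Lemma sumXE (F : nzRingType) n (a : 'I_n -> F) :
  \sum_(k < n) a k *: 'X^k = \poly_(k < n) (oapp a 0 (insub k)).
Proof. by rewrite poly_def; apply: eq_bigr => k _; rewrite valK. Qed.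

Lemma dvdp_sumP (F : idomainType) (I : finType) (P : pred I) (G : {poly F}) (T : I -> {poly F}) :
  (forall i, P i -> G %| T i) -> G %| \sum_(i | P i) T i.
Proof.
move=> h; apply: (big_ind (fun x => G %| x)) => //.
by move=> x y hx hy; rewrite dvdp_add.
Qed.

Lemma sig_sum (R : nmodType) (I : finType) (J : I -> finType) (F : {i : I & J i} -> R) :
  \sum_x F x = \sum_i \sum_(y : J i) F (Tagged J y).
Proof.
rewrite (sig_big_dep xpredT (fun _ => xpredT) (fun i y => F (Tagged J y))) /=.
by apply: eq_bigr => -[].
Qed.

Section Indep.
Variables (F : fieldType) (m : nat) (gb : 'I_m -> {poly F}) (l d : 'I_m -> nat).
Hypothesis hmon : forall i, gb i \is monic.
Hypothesis hsz : forall i, size (gb i) = (d i).+1.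
Hypothesis hcop : forall i i', i != i' -> coprimep (gb i) (gb i').

Definition Wp (i : 'I_m) (j : nat) :=
  (\prod_(i' | i' != i) gb i' ^+ l i') * gb i ^+ (l i - j.+1).

Lemma indep_Fp (c : {i : 'I_m & {j : 'I_(l i) & 'I_(d i)}} -> F) :
  \sum_x c x *: (Wp (tag x) (tag (tagged x)) * 'X^(tagged (tagged x))) = 0 ->
  forall x, c x = 0.
Proof.
rewrite sig_sum => hs [i0 [j0 k0]].
pose T i := \sum_(y : {j : 'I_(l i) & 'I_(d i)}) c (Tagged _ y) *:
   (Wp i (tag y) * 'X^(tagged y)).
have gb0 i : gb i != 0 by rewrite -size_poly_gt0 hsz.
set G := gb i0 ^+ l i0.
set U := \prod_(i' | i' != i0) gb i' ^+ l i'.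
have hG : G %| T i0.
  have hs' : \sum_i T i = 0 := hs.
  move: hs'; rewrite (bigD1 i0) //= => /eqP; rewrite addr_eq0 => /eqP ->.
  rewrite dvdpNr; apply: dvdp_sumP => i ii0.
  apply: dvdp_sumP => y _; rewrite -mul_polyC dvdp_mull // /Wp -mulrA dvdp_mulr //.
  by rewrite (bigD1 i0) 1?eq_sym //= dvdp_mulr.
pose Pj (j : 'I_(l i0)) := \sum_(k < d i0) c (existT _ i0 (existT _ j k)) *: 'X^k.
have eT : T i0 = U * \sum_(j < l i0) Pj j * gb i0 ^+ (l i0 - j.+1).
  rewrite /T sig_sum mulr_sumr; apply: eq_bigr => j _.
  rewrite /Pj mulr_suml mulr_sumr; apply: eq_bigr => k _ /=; rewrite /Wp -/U.
  by rewrite -!mul_polyC; ring.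
have cGU : coprimep G U.
  rewrite /U; apply: (big_ind (coprimep G)); first exact: coprimep1.
    by move=> x y hx hy; rewrite coprimepMr hx hy.
  by move=> i' hi'; rewrite coprimep_expl // coprimep_expr // hcop // eq_sym.
rewrite eT Gauss_dvdpr // in hG.
rewrite (reindex_inj rev_ord_inj) /= in hG.
have hPs j : (size (Pj j) < size (gb i0))%N.
  by rewrite hsz ltnS /Pj sumXE size_poly.
have hG' : G %| \sum_(j < l i0) Pj (rev_ord j) * gb i0 ^+ j.
  move: hG; congr (_ %| _); apply: eq_bigr => j _.
  congr (_ * gb i0 ^+ _); rewrite /=; have := ltn_ord j; lia.
have := @base_uniq F (gb i0) (l i0) (fun j => Pj (rev_ord j)) (gb0 i0) (fun j => hPs (rev_ord j)) hG' (rev_ord j0).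
rewrite rev_ordK => h0; move: (congr1 (fun P : {poly F} => P`_k0) h0).
by rewrite /Pj sumXE coef_poly ltn_ord valK coef0.
Qed.
End Indep.

Lemma irr_noroot (fr R : {poly rat}) (t : algC) :
  irreducible_poly fr -> root (map_poly ratr fr) t ->
  root (map_poly ratr R) t -> (size R < size fr)%N -> R = 0.
Proof.
move=> [fr1 hirr] rf rR hs; apply/eqP; apply: contraT => R0.
set G := gcdp fr R.
have hG : root (map_poly ratr G) t by rewrite gcdp_map root_gcd rf rR.
have G0 : G != 0 by rewrite gcdp_eq0 negb_and R0 orbT.
have sG : size G = 1%N.
  apply/eqP; apply: contraT => sG1.
  have := hirr G sG1 (dvdp_gcdl _ _) => /eqp_size eqs.
  have := dvdp_leq R0 (dvdp_gcdr fr R); rewrite -/G eqs => h.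
  by move: (leq_ltn_trans h hs); rewrite ltnn.
move/eqP: sG => /size_poly1P [c c0 Gc].
by move: hG; rewrite Gc map_polyC rootC /= fmorph_eq0 (negbTE c0).
Qed.



Section Main.
Variables (f : {poly int}) (theta : algC) (N m : nat)
  (g : 'I_m -> {poly int}) (l : 'I_m -> nat) (p : nat).
Hypotheses (hfm : f \is monic)
  (hirr : irreducible_poly (map_poly (fun z : int => z%:~R) f : {poly rat}))
  (hroot : root (polyC_alg f) theta)
  (hgm : forall i, g i \is monic)
  (hgs : forall i, (1 < size (g i))%N)
  (hl : forall i, (0 < l i)%N)
  (hcong : forall k : nat, (N%:Z %| (f - \prod_(i < m) g i ^+ l i)`_k)%Z)
  (hcop : forall i i', i != i' -> coprimep (redp p (g i)) (redp p (g i')))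
  (pp : prime p) (pN : (p %| N)%N).

Local Notation X := {i : 'I_m & {j : 'I_(l i) & 'I_((size (g i)).-1)}}.
Definition alpha := fun x : X =>
    (polyC_alg (f %/ g (tag x) ^+ (tag (tagged x)).+1)).[theta]
      * theta ^+ (tagged (tagged x)).
Definition qpol := fun x : X =>
    (f %/ g (tag x) ^+ (tag (tagged x)).+1) * 'X^(tagged (tagged x)).

Definition gb i := redp p (g i).

Lemma red0 (z : int) : (p %| z)%Z -> (z%:~R : 'F_p) = 0.
Proof. by rewrite (dvdz_pcharf (pchar_Fp pp)) => /eqP. Qed.

Lemma size_red (P : {poly int}) : P \is monic -> size (redp p P) = size P.
Proof. by move=> /monicP h; rewrite size_map_poly_id0 // h oner_neq0. Qed.

Lemma size_redp_le (P : {poly int}) : (size (redp p P) <= size P)%N.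
Proof. by apply/leq_sizeP => j hj; rewrite coef_map nth_default. Qed.

Lemma gb_monic i : gb i \is monic.
Proof. exact: monic_map. Qed.

Lemma hfp : redp p f = \prod_i gb i ^+ l i.
Proof.
apply/eqP; rewrite -subr_eq0; apply/eqP.
have -> : \prod_i gb i ^+ l i = redp p (\prod_i g i ^+ l i).
  by rewrite /redp rmorph_prod; apply: eq_bigr => i _; rewrite rmorphXn.
rewrite /redp -rmorphB; apply/polyP => k; rewrite coef_map coef0 /=.
apply: red0; apply: dvdz_trans (hcong k); by rewrite dvdzE.
Qed.

Lemma red_div i (j : nat) : (j < l i)%N ->
  redp p (f %/ g i ^+ j.+1) = @Wp _ m gb l i j.
Proof.
move=> jl; set G := g i ^+ j.+1.
have mG : G \is monic by apply: monic_exp.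
have G0 : G != 0 by apply: monic_neq0.
have e := Pdiv.IdomainMonic.divp_eq mG f.
have hr : (size (redp p (f %% G)) < size (redp p G))%N.
  rewrite [size (redp p G)]size_red //.
  by apply: leq_ltn_trans (size_redp_le _) _; rewrite ltn_modp.
have e1 : redp p f = redp p (f %/ G) * redp p G + redp p (f %% G).
  by rewrite {1}e /redp rmorphD rmorphM.
have e2 : redp p f = @Wp _ m gb l i j * redp p G + 0.
  rewrite addr0 hfp (bigD1 i) //= /Wp /G /redp rmorphXn -/(gb i) -mulrA -exprD.
  by rewrite subnK // mulrC.
rewrite (divpP e1 hr) (divpP e2) // size_poly0 size_red //.
by rewrite -size_poly_gt0 in G0.
Qed.

Lemma red_qpol x : redp p (qpol x) =
  @Wp _ m gb l (tag x) (tag (tagged x)) * 'X^(tagged (tagged x)).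
Proof. by rewrite /qpol /redp rmorphM /= map_polyXn -/(redp _ _) red_div. Qed.

Lemma claim3 (c : X -> 'F_p) :
  \sum_x c x *: redp p (qpol x) = 0 -> forall x, c x = 0.
Proof.
move=> h; apply: (@indep_Fp _ m gb l (fun i => (size (g i)).-1)).
- by move=> i; rewrite /gb size_red // prednK // ltnW.
- exact: hcop.
- by rewrite -[RHS]h; apply: eq_bigr => x _; rewrite red_qpol.
Qed.

Lemma card_X : #|{: X}| = (\sum_(i < m) l i * (size (g i)).-1)%N.
Proof.
rewrite -sum1_card.
rewrite -(sig_big_dep xpredT (fun _ => xpredT) (fun _ _ => 1%N)) /=.
apply: eq_bigr => i _.
rewrite -(sig_big_dep xpredT (fun _ => xpredT) (fun _ _ => 1%N)) /=.
rewrite (eq_bigr (fun _ => (size (g i)).-1)); last first.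
  by move=> j _; rewrite sum1_card card_ord.
by rewrite sum_nat_const card_ord.
Qed.

Lemma size_f : (size f).-1 = #|{: X}|.
Proof.
rewrite card_X -(@size_red f hfm) hfp.
suff : (\prod_i gb i ^+ l i) \is monic /\
  (size (\prod_i gb i ^+ l i)).-1 = (\sum_(i < m) l i * (size (g i)).-1)%N by case.
apply: (big_ind2 (fun P n => P \is monic /\ (size P).-1 = n)).
- by rewrite monic1 size_poly1.
- move=> P1 n1 P2 n2 [m1 <-] [m2 <-]; split; first by rewrite monicMl.
  rewrite size_Mmonic ?monic_neq0 //.
  have := monic_neq0 m1; have := monic_neq0 m2.
  rewrite -!size_poly_gt0; lia.
- move=> i _; split; first by apply: monic_exp; apply: gb_monic.
  by rewrite size_exp /gb size_red // mulnC.
Qed.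

Lemma size_qpol x : (size (qpol x) <= #|{: X}|)%N.
Proof.
rewrite -size_f /qpol.
case: x => i [j k] /=.
set G := g i ^+ j.+1.
have mG : G \is monic by apply: monic_exp.
have G0 : G != 0 by apply: monic_neq0.
have sG : (size G).-1 = ((size (g i)).-1 * j.+1)%N by rewrite size_exp.
have d1 : (0 < (size (g i)).-1)%N by have := hgs i; lia.
have hk := ltn_ord k.
have hD : ((size (g i)).-1 <= (size (g i)).-1 * j.+1)%N by rewrite leq_pmulr.
have [q0|q0] := eqVneq (f %/ G) 0; first by rewrite q0 mul0r size_poly0.
have sq := size_divp f G0.
have : (0 < size (f %/ G)%R)%N by rewrite size_poly_gt0.
move=> hq; apply: (leq_trans (size_polyMleq _ _)); rewrite size_polyXn.
rewrite sq sG in hq *.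
move: hk hD hq d1; set D := ((size (g i)).-1 * j.+1)%N; set sf := size f.
have : forall kk dd D sf : nat, (kk < dd -> dd <= D -> 0 < sf - D -> 0 < dd -> (sf - D + kk.+1).-1 <= sf.-1)%N by move=> *; lia.
by apply.
Qed.

Definition s := #|{: X}|.
Definition Mx : 'M[int]_s := \matrix_(i, j) (qpol (enum_val i))`_j.

Lemma sum_X_ord (R : nmodType) (F : 'I_s -> R) :
  \sum_(i < s) F i = \sum_(x : X) F (enum_rank x).
Proof. by rewrite (reindex (@enum_rank X)) //; apply: onW_bij; apply: enum_rank_bij. Qed.

Lemma detM_ndvd : ~~ (p %| \det Mx)%Z.
Proof.
set Mp := map_mx (fun z : int => (z%:~R : 'F_p)) Mx.
have : Mp \in unitmx.
  rewrite -row_free_unit -kermx_eq0; apply/eqP/row_matrixP => r; rewrite row0.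
  set u := row r (kermx Mp).
  have hu : u *m Mp = 0 by apply/sub_kermxP; rewrite row_sub.
  pose c x := u 0 (enum_rank x).
  have hc : \sum_x c x *: redp p (qpol x) = 0.
    apply/polyP => k; rewrite coef0 coef_sum.
    under eq_bigr do rewrite coefZ.
    case: (ltnP k s) => hk.
    - have := congr1 (fun A : 'M['F_p]_(1, s) => A 0 (Ordinal hk)) hu; rewrite !mxE => h.
      rewrite -[RHS]h sum_X_ord; apply: eq_bigr => x _.
      by rewrite /c !mxE enum_rankK coef_map.
    - apply: big1 => x _; rewrite nth_default ?mulr0 //.
      apply: leq_trans (size_redp_le _) _; apply: leq_trans (size_qpol x) hk.
  have h0 := @claim3 c hc.
  by apply/rowP => t; rewrite [RHS]mxE; have := h0 (enum_val t); rewrite /c enum_valK.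
rewrite unitmxE det_map_mx unitfE => h.
by rewrite (dvdz_pcharf (pchar_Fp pp)).
Qed.

Lemma size_map_le (R : nzRingType) (P : {poly int}) :
  (size (map_poly (fun z : int => (z%:~R : R)) P) <= size P)%N.
Proof. by apply/leq_sizeP => j hj; rewrite coef_map nth_default. Qed.

Lemma polyC_alg_rat P :
  polyC_alg P = map_poly ratr (map_poly (fun z : int => z%:~R) P : {poly rat}).
Proof.
by rewrite /polyC_alg -map_poly_comp; apply: eq_map_poly => z /=; rewrite ratr_int.
Qed.

Lemma alphaE x : alpha x = (polyC_alg (qpol x)).[theta].
Proof. by rewrite /alpha /qpol /polyC_alg rmorphM /= map_polyXn hornerM hornerXn. Qed.

Lemma alpha_mx t : alpha (enum_val t) = \sum_(k < s) (Mx t k)%:~R * theta ^+ k.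
Proof.
rewrite alphaE (horner_coef_wide _ (leq_trans (size_map_le _ _) (size_qpol _))).
by apply: eq_bigr => k _; rewrite coef_map mxE.
Qed.


Lemma detM0 : \det Mx != 0.
Proof. by have := detM_ndvd; apply: contra => /eqP ->; rewrite dvdz0. Qed.

Lemma indep_rat (c : X -> rat) :
  \sum_x ratr (c x) * alpha x = 0 -> forall x, c x = 0.
Proof.
move=> h.
pose R : {poly rat} := \sum_x c x *: map_poly (fun z : int => z%:~R) (qpol x).
have hR : root (map_poly ratr R) theta.
  rewrite /root rmorph_sum horner_sum -[X in _ == X]h; apply/eqP.
  apply: eq_bigr => x _; rewrite /= map_polyZ hornerZ alphaE polyC_alg_rat.
  by [].
have sR : (size R < size (map_poly (fun z : int => (z%:~R : rat)) f))%N.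
  rewrite size_map_poly_id0; last by rewrite (monicP hfm) oner_neq0.
  have : (size R <= s)%N.
    apply: (big_ind (fun P : {poly rat} => size P <= s)%N) => //.
      by rewrite size_poly0.
      by move=> P Q hP hQ; apply: leq_trans (size_polyD _ _) _; rewrite geq_max hP hQ.
    move=> x _; apply: leq_trans (size_scale_leq _ _) _.
    exact: leq_trans (size_map_le _ _) (size_qpol _).
  move=> hs; apply: leq_ltn_trans hs _; rewrite /s -size_f prednK //.
  by rewrite size_poly_gt0 monic_neq0.
have rf : root (map_poly ratr (map_poly (fun z : int => (z%:~R : rat)) f)) theta by rewrite -polyC_alg_rat.
have R0 := @irr_noroot _ R theta hirr rf hR sR.
pose v : 'rV[rat]_s := \row_i c (enum_val i).
pose Mq := map_mx (fun z : int => (z%:~R : rat)) Mx.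
have hv : v *m Mq = 0.
  apply/rowP => k; rewrite !mxE.
  have := congr1 (fun P : {poly rat} => P`_k) R0; rewrite coef0 coef_sum => hk.
  rewrite -[RHS]hk sum_X_ord; apply: eq_bigr => x _.
  by rewrite !mxE enum_rankK coefZ coef_map.
have uM : Mq \in unitmx.
  by rewrite unitmxE det_map_mx unitfE intr_eq0 detM0.
have v0 : v = 0 by rewrite -(mulmxK uM v) hv mul0mx.
move=> x; have := congr1 (fun w : 'rV[rat]_s => w 0 (enum_rank x)) v0.
by rewrite !mxE enum_rankK.
Qed.

Lemma Zloc_Crat x : Zloc p x -> x \in Crat.
Proof. by move=> [a [b [_ ->]]]; rewrite rpred_div ?rpred_int ?rpred_nat. Qed.

Lemma claim1c (c : X -> algC) : (forall x, Zloc p (c x)) ->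
  \sum_x c x * alpha x = 0 -> forall x, c x = 0.
Proof.
move=> hc h x.
have hc' y : ratr (getCrat (c y)) = c y by apply: getCratK; apply: Zloc_Crat.
have h' : \sum_y ratr (getCrat (c y)) * alpha y = 0.
  by rewrite -[RHS]h; apply: eq_bigr => y _; rewrite hc'.
by rewrite -hc' (@indep_rat (fun y => getCrat (c y)) h' x) rmorph0.
Qed.

Lemma claim2 (c : X -> int) :
  \sum_x (c x)%:~R * alpha x = 0 -> forall x, c x = 0.
Proof.
move=> h x.
have h' : \sum_y ratr ((c y)%:~R : rat) * alpha y = 0.
  by rewrite -[RHS]h; apply: eq_bigr => y _; rewrite ratr_int.
by apply/eqP; rewrite -(intr_eq0 rat) (@indep_rat (fun y => (c y)%:~R) h' x).
Qed.

Lemma hpow i : theta ^+ i =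
  \sum_(j < s) ((('X^i %% f)`_j)%:~R) * theta ^+ j.
Proof.
have e := Pdiv.IdomainMonic.divp_eq hfm 'X^i.
have f0 : f != 0 by apply: monic_neq0.
have hr : (size ('X^i %% f)%R <= s)%N.
  rewrite /s -size_f -ltnS prednK ?size_poly_gt0 // ltn_modp //.
have -> : theta ^+ i = (polyC_alg 'X^i).[theta].
  by rewrite /polyC_alg map_polyXn hornerXn.
rewrite {1}e /polyC_alg rmorphD rmorphM /= hornerD hornerM.
move/rootP: hroot; rewrite /polyC_alg => ->; rewrite mulr0 add0r.
rewrite (horner_coef_wide _ (leq_trans (size_map_le _ _) hr)).
by apply: eq_bigr => j _; rewrite coef_map.
Qed.

Lemma hbase (j : 'I_s) : theta ^+ j =
  \sum_(t < s) ((\adj Mx) j t)%:~R / (\det Mx)%:~R * alpha (enum_val t).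
Proof.
have d0 : ((\det Mx)%:~R : algC) != 0 by rewrite intr_eq0 detM0.
have key : \sum_(t < s) ((\adj Mx) j t)%:~R * alpha (enum_val t)
    = (\det Mx)%:~R * theta ^+ j.
  under eq_bigr do rewrite alpha_mx mulr_sumr.
  rewrite exchange_big /=.
  under eq_bigr => k _.
    rewrite (eq_bigr (fun t => ((\adj Mx j t * Mx t k)%:~R * theta ^+ k)));
      last by move=> t _; rewrite intrM mulrA.
    rewrite -mulr_suml -rmorph_sum /=.
    have -> : (\sum_t \adj Mx j t * Mx t k) = (\adj Mx *m Mx) j k by rewrite mxE.
    rewrite mul_adj_mx mxE.
    over.
  rewrite (bigD1 j) //= eqxx mulr1n big1 ?addr0 // => k /negbTE.
  by rewrite eq_sym => ->; rewrite mulr0n mul0r.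
apply: (mulfI d0); rewrite -key mulr_sumr; apply: eq_bigr => t _.
by field.
Qed.

Lemma span1b y : ZlocTheta p theta y ->
  exists c : X -> algC, (forall x, Zloc p (c x)) /\ y = \sum_x c x * alpha x.
Proof.
move=> [P [hP ->]].
pose e (j t : 'I_s) : algC := ((\adj Mx) j t)%:~R / (\det Mx)%:~R.
pose r (i : nat) (j : 'I_s) : algC := ((('X^i %% f)`_j)%:~R).
pose c (x : X) := \sum_(i < size P) \sum_(j < s) P`_i * r i j * e j (enum_rank x).
exists c; split.
  move=> x; apply: Zloc_sum => // i; apply: Zloc_sum => // j.
  apply: Zloc_mul => //; first apply: Zloc_mul => //; first exact: Zloc_int.
  apply: Zloc_mul => //; first exact: Zloc_int.
  exact: Zloc_inv detM_ndvd.
rewrite horner_coef.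
under eq_bigr => i _.
  rewrite hpow mulr_sumr.
  under eq_bigr => j _.
    rewrite -/(r i j) hbase mulr_sumr mulr_sumr.
    over.
  rewrite exchange_big /=.
  over.
rewrite exchange_big /= sum_X_ord.
apply: eq_bigr => x _; rewrite enum_rankK /c mulr_suml.
apply: eq_bigr => i _; rewrite mulr_suml.
by apply: eq_bigr => j _; rewrite /e !mulrA.
Qed.
End Main.



Theorem lemma4p4
  (f : {poly int}) (theta : algC) (N : nat) (m : nat)
  (g : 'I_m -> {poly int}) (l : 'I_m -> nat) (p : nat) :
  f \is monic ->
  irreducible_poly (map_poly (fun z : int => z%:~R) f : {poly rat}) ->
  (1 < (size f).-1)%N ->
  root (polyC_alg f) theta ->
  (1 < N)%N ->
  (forall q : nat, prime q -> (q %| N)%N -> ((size f).-1 < q)%N) ->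
  (forall i, g i \is monic) ->
  (forall i, (1 < size (g i))%N) ->
  (forall i, (0 < l i)%N) ->
  (forall k : nat, (N%:Z %| (f - \prod_(i < m) g i ^+ l i)`_k)%Z) ->
  (forall q : nat, prime q -> (q %| N)%N ->
     (forall i, squarefree_poly (redp q (g i))) /\
     (forall i i', i != i' -> coprimep (redp q (g i)) (redp q (g i')))) ->
  prime p -> (p %| N)%N ->
  let alpha := fun x : {i : 'I_m & {j : 'I_(l i) & 'I_((size (g i)).-1)}} =>
    (polyC_alg (f %/ g (tag x) ^+ (tag (tagged x)).+1)).[theta]
      * theta ^+ (tagged (tagged x)) in
  let qpol := fun x : {i : 'I_m & {j : 'I_(l i) & 'I_((size (g i)).-1)}} =>
    (f %/ g (tag x) ^+ (tag (tagged x)).+1) * 'X^(tagged (tagged x)) in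
  [/\ is_Zloc_basis p theta alpha,
      (forall c : {i : 'I_m & {j : 'I_(l i) & 'I_((size (g i)).-1)}} -> int,
         \sum_x (c x)%:~R * alpha x = 0 -> forall x, c x = 0)
    & (forall c : {i : 'I_m & {j : 'I_(l i) & 'I_((size (g i)).-1)}} -> 'F_p,
         \sum_x c x *: redp p (qpol x) = 0 -> forall x, c x = 0)].
Proof.
move=> hfm hirr _ hroot _ _ hgm hgs _ hcong hsq pp pN alpha0 qpol0.
have hcop := (hsq p pp pN).2.
split.
- split.
  + move=> x; exists (polyC_alg (qpol f m g l x)); split.
      by move=> i; rewrite /polyC_alg coef_map; apply: Zloc_int.
    exact: (alphaE f theta m g l x).
  + exact: (@span1b f theta N m g l p hfm hroot hgm hgs hcong hcop pp pN).
  + exact: (@claim1c f theta N m g l p hfm hirr hroot hgm hgs hcong hcop pp pN).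
- exact: (@claim2 f theta N m g l p hfm hirr hroot hgm hgs hcong hcop pp pN).
- exact: (@claim3 f N m g l p hgm hgs hcong hcop pp pN).
Qed.
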